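(* Let the configuration space be $\mathbb{R}^n$ with each coordinate an independent double integrator $\ddot q_i=a_i$, $a_i\in[-1,1]$, and let $q_I,q_G\in\mathcal{C}_{free}$. Any piecewise-linear path $\tau:[0,1]\to\mathcal{C}_{free}$ with $\tau(0)=q_I$, $\tau(1)=q_G$ is converted by the bang-bang transform into an acceleration control $a(\cdot):[0,t_F]\to[-1,1]^n$ whose state trajectory from $x_I=(q_I,\mathbf{0})$ lies in $X_{free}=\{(q,\dot q): q\in\mathcal{C}_{free}\}$ and reaches $x_G=(q_G,\mathbf{0})$ at time $t_F$; i.e., it yields a solution to the rest-to-rest kinodynamic planning problem for the double integrator system.
   Context: $\mathcal{C}_{free}$ is the open set of collision-free configurations. Bang-bang transform: for each edge of $\tau$ from vertex $q$ to the next vertex $q'$, let $v=q'-q$, $\hat v=v/\|v\|$, $s=\max_i|\hat v_i|$, acceleration vector $a=\hat v/s$ and $t=\sqrt{s\|v\|}$; the edge control is apply $a$ for time $t$ then $-a$ for time $t$. The edge controls are concatenated in order along the path. *)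

(* Defs.v *)
From HB Require Import structures.
From mathcomp Require Import all_boot all_order all_algebra.
From mathcomp Require Import all_classical all_reals all_analysis.
Set Implicit Arguments. Unset Strict Implicit. Unset Printing Implicit Defensive.
Import Order.TTheory GRing.Theory Num.Theory numFieldNormedType.Exports.
Local Open Scope classical_set_scope.
Local Open Scope ring_scope.

Section BangBang.
Variables (R : realType) (n : nat).

Definition enorm (v : 'rV[R]_n) : R := Num.sqrt (\sum_(i < n) (v 0 i) ^+ 2).

(* A piecewise-constant acceleration control: a sequence of pieces
   (acceleration vector, duration), applied one after the other. *)
Definition control := seq ('rV[R]_n * R).

Definition edge_ctrl (q q' : 'rV[R]_n) : control :=
  let v := q' - q in
  let vh := (enorm v)^-1 *: v in
  let s := \big[Num.max/0]_(i < n) `|vh 0 i| in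
  let a := s^-1 *: vh in
  let t := Num.sqrt (s * enorm v) in
  [:: (a, t); (- a, t)].

(* Bang-bang transform of the piecewise-linear path with vertices q :: qs:
   concatenation of the edge controls in order. *)
Fixpoint bang_bang (q : 'rV[R]_n) (qs : seq 'rV[R]_n) : control :=
  if qs is q' :: qs' then edge_ctrl q q' ++ bang_bang q' qs' else [::].

Definition duration (u : control) : R := \sum_(c <- u) c.2.

(* Value of the control at time t (right-continuous convention;
   0 after the end). *)
Fixpoint ctrl_at (u : control) (t : R) : 'rV[R]_n :=
  if u is (a, d) :: u' then (if t < d then a else ctrl_at u' (t - d))
  else 0.

Fixpoint switch_times (u : control) (t0 : R) : seq R :=
  if u is (_, d) :: u' then (t0 + d) :: switch_times u' (t0 + d) else [::].

Fixpoint segments_in (C : set 'rV[R]_n) (q : 'rV[R]_n) (qs : seq 'rV[R]_n)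
  : Prop :=
  if qs is q' :: qs' then
    (forall l : R, 0 <= l <= 1 -> C ((1 - l) *: q + l *: q')) /\
    segments_in C q' qs'
  else True.

(* (q, p) is the state trajectory (position, velocity) on [0, tF] of the
   double integrator  q'' = u(t)  started at (q0, p0):
   q, p continuous on [0,tF], q' = p on ]0,tF[, and p' = u(t) on ]0,tF[
   except at the (finitely many) switching times of u. *)
Definition DI_trajectory (u : control) (q0 p0 : 'rV[R]_n)
  (q p : R -> 'rV[R]_n) : Prop :=
  let tF := duration u in
  [/\ q 0 = q0 /\ p 0 = p0,
      {within `[0, tF], continuous q},
      {within `[0, tF], continuous p},
      (forall t, 0 < t < tF -> is_derive t 1 q (p t)) &
      (forall t, 0 < t < tF -> t \notin switch_times u 0 ->
         is_derive t 1 p (ctrl_at u t))].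

End BangBang.

(* Main.v *)
Require Import Defs.
From HB Require Import structures.
From mathcomp Require Import all_boot all_order all_algebra.
From mathcomp Require Import all_classical all_reals all_analysis.
From mathcomp Require Import ring lra.
Import Order.TTheory GRing.Theory Num.Theory numFieldNormedType.Exports.
Local Open Scope classical_set_scope.
Local Open Scope ring_scope.

Set Implicit Arguments. Unset Strict Implicit.



Section S.
Variables (R : realType) (n : nat).

Lemma is_deriveZr_vec (f : R -> R) (a : 'rV[R]_n) (x df : R) :
  is_derive x 1 f df -> is_derive x 1 (fun t => f t *: a) (df *: a).
Proof.
move=> [df1 dfv].
have E : (fun h : R => h^-1 *: (((fun t => f t *: a) \o shift x) (h *: 1) - f x *: a))
   = (fun h => (h^-1 *: ((f \o shift x) (h *: 1) - f x)) *: a).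
  by apply/funext => h /=; rewrite -scalerBl scalerA.
have cv : (fun h : R => h^-1 *: (((fun t => f t *: a) \o shift x) (h *: 1) - f x *: a)) @ 0^' --> df *: a.
  rewrite E; apply: cvgZr_tmp; rewrite -dfv; exact: df1.
apply: DeriveDef; first by apply/cvg_ex; exists (df *: a).
exact: cvg_lim cv.
Qed.
End S.



Section S.
Variables (R : realType).

Definition rr (c t : R) : R := Num.max (t - c) 0.
Definition r2 (c t : R) : R := rr c t ^+ 2 / 2.
Definition HH (c t : R) : R := if c <= t then 1 else 0.

Lemma rr_pos (c t : R) : c <= t -> rr c t = t - c.
Proof. by move=> ct; apply/max_idPl; rewrite subr_ge0. Qed.

Lemma rr_neg (c t : R) : t <= c -> rr c t = 0.
Proof. by move=> ct; apply/max_idPr; rewrite subr_le0. Qed.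

Lemma rr_cont (c : R) : continuous (rr c).
Proof.
move=> x; apply: (@continuous_max _ _ (fun t : R => t - c) (cst 0)).
  by apply: continuousB => //; apply: cvg_cst.
exact: cvg_cst.
Qed.

Lemma deriv_rr (c x : R) : x != c -> is_derive x 1 (rr c) (HH c x).
Proof.
rewrite neq_lt => /orP[xc|cx].
  rewrite /HH leNgt xc /=.
  apply: (@near_eq_is_derive _ _ _ (cst 0)).  
  near=> t; rewrite /rr /cst; apply/esym/max_idPr.
  rewrite subr_le0 ltW //; near: t; exact: lt_nbhsl.
rewrite /HH ltW //.
apply: (@near_eq_is_derive _ _ _ (fun t => t - c)).
  near=> t; rewrite /rr; apply/esym/max_idPl.
  rewrite subr_ge0 ltW //; near: t; exact: lt_nbhsr.
exact: is_derive_shift.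
Unshelve. all: by end_near.
Qed.

Lemma deriv_r2 (c x : R) : is_derive x 1 (r2 c) (rr c x).
Proof.
have [xc|cx|->] := ltgtP x c.
- have E : rr c x = 0 by apply/max_idPr; rewrite subr_le0 ltW.
  rewrite E.
  apply: (@near_eq_is_derive _ _ _ (cst 0)).
  near=> t; rewrite /r2 /rr /cst.
  have -> : Num.max (t - c) 0 = 0.
    apply/max_idPr; rewrite subr_le0 ltW //; near: t; exact: lt_nbhsl.
  by rewrite expr0n /= mul0r.
- have E : rr c x = x - c by apply/max_idPl; rewrite subr_ge0 ltW.
  have h1 : is_derive x 1 (shift (- c)) 1 := is_derive_shift _ _ _.
  have h2 := is_deriveX 2 h1.
  have h3 := is_deriveZ (2^-1) h2.
  apply: is_derive_eq; first apply: (near_eq_is_derive _ h3).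
    near=> t; rewrite /r2 /rr /=.
    have -> : Num.max (t - c) 0 = t - c.
      apply/max_idPl; rewrite subr_ge0 ltW //; near: t; exact: lt_nbhsr.
    by rewrite mulrC.
  rewrite E /= expr1 scalerA mulrA mulVf ?pnatr_eq0 // mul1r; exact: mulr1.
- have E0 : rr c c = 0 by rewrite /rr subrr maxxx.
  rewrite E0.
  have id0 : (fun h : R => h) @ 0^' --> (0:R) by exact: nbhs_dnbhs.
  have n0 : (fun h : R => `|h|) @ 0^' --> (0:R).
    by have := cvg_norm id0; rewrite normr0; apply; apply: dnbhs_filter.
  have Q : (fun h : R => h^-1 *: ((r2 c \o shift c) (h *: 1) - r2 c c)) @ 0^' --> (0:R).
    apply: (@squeeze_cvgr _ _ _ _ (fun h => - `|h|) (fun h => `|h|)).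
    - near=> h.
      have hn0 : h != 0 by near: h; exact: nbhs_dnbhs_neq.
      rewrite /r2 E0 expr0n /= mul0r subr0.
      change (- `|h| <= h^-1 * (rr c (h * 1 + c) ^+ 2 / 2) <= `|h|).
      rewrite mulr1.
      have [h0|h0] := ltP 0 h.
        rewrite rr_pos ?addrK; last by rewrite lerDr ltW.
        rewrite gtr0_norm // expr2 -mulrA mulKf //.
        apply/andP; split.
          by apply: le_trans (_ : 0 <= _); [rewrite oppr_le0 ltW | rewrite divr_ge0 // ltW].
        by rewrite ler_pdivrMr // ler_peMr // ?ler1n // ltW.
      rewrite rr_neg; last by rewrite gerDr.
      by rewrite expr0n /= mul0r mulr0 oppr_le0 normr_ge0.
    - have := cvgN n0; rewrite oppr0; apply; exact: dnbhs_filter.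
    - move: n0; apply; exact: dnbhs_filter.
  apply: DeriveDef; first by apply/cvg_ex; exists 0.
  exact: cvg_lim Q.
Unshelve. all: by end_near.
Qed.
End S.



Section S3.
Variables (R : realType) (n : nat).
Notation vec := 'rV[R]_n.

Definition eS (q q' : vec) : R :=
  \big[Num.max/0]_(i < n) `|((enorm (q' - q))^-1 *: (q' - q)) 0 i|.
Definition aE (q q' : vec) : vec :=
  (eS q q')^-1 *: ((enorm (q' - q))^-1 *: (q' - q)).
Definition TE (q q' : vec) : R := Num.sqrt (eS q q' * enorm (q' - q)).

Lemma edge_ctrlE q q' : edge_ctrl q q' = [:: (aE q q', TE q q'); (- aE q q', TE q q')].
Proof. by []. Qed.

Lemma TE_ge0 q q' : 0 <= TE q q'.
Proof. exact: sqrtr_ge0. Qed.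

Lemma eS_ge0 q q' : 0 <= eS q q'.
Proof. exact: bigmax_ge_id. Qed.

Lemma enorm_ge0 (v : vec) : 0 <= enorm v.
Proof. exact: sqrtr_ge0. Qed.

Lemma enorm_eq0 (v : vec) : enorm v = 0 -> v = 0.
Proof.
move=> /eqP; rewrite /enorm sqrtr_eq0 => H.
have H0 : \sum_(i < n) v 0 i ^+ 2 = 0.
  by apply/eqP; rewrite eq_le H /=; apply: sumr_ge0 => i _; exact: sqr_ge0.
apply/rowP => i; rewrite mxE.
have /psumr_eq0P P := H0.
have := P (fun i _ => sqr_ge0 (v 0 i)) i isT.
by move/eqP; rewrite sqrf_eq0 => /eqP.
Qed.

Lemma aE_bound q q' i : -1 <= aE q q' 0 i <= 1.
Proof.
rewrite -ler_norml /aE mxE normrM.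
have [s0|s0] := eqVneq (eS q q') 0.
  by rewrite s0 invr0 normr0 mul0r ler01.
have sp : 0 < eS q q' by rewrite lt_neqAle eq_sym s0 eS_ge0.
rewrite gtr0_norm ?invr_gt0 // mulrC ler_pdivrMr // mul1r.
exact: le_bigmax.
Qed.

Lemma aE_T2 q q' : (TE q q' ^+ 2) *: aE q q' = q' - q.
Proof.
rewrite /TE sqr_sqrtr; last by rewrite mulr_ge0 ?eS_ge0 ?enorm_ge0.
have [e0|e0] := eqVneq (enorm (q' - q)) 0.
  by rewrite e0 mulr0 scale0r (enorm_eq0 e0).
have [s0|s0] := eqVneq (eS q q') 0.
  exfalso; move/negP: (e0); apply; apply/eqP.
  have H : (enorm (q' - q))^-1 *: (q' - q) = 0.
    apply/rowP => i.
    have Hi : `|((enorm (q' - q))^-1 *: (q' - q)) 0 i| <= eS q q' by exact: le_bigmax.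
    rewrite s0 in Hi; rewrite [RHS]mxE; apply/normr0_eq0/eqP.
    by rewrite eq_le normr_ge0 andbT.
  have : q' - q = 0.
    by rewrite -[q' - q]scale1r -(mulfV e0) -scalerA H scaler0.
  by move=> ->; rewrite /enorm; apply/eqP; rewrite sqrtr_eq0 big1 // => i _; rewrite mxE expr0n.
rewrite /aE !scalerA.
have -> : eS q q' * enorm (q' - q) * ((eS q q')^-1 / enorm (q' - q)) = 1.
  by field; rewrite e0 s0.
by rewrite scale1r.
Qed.

End S3.



Section S4.
Variables (R : realType).

Definition phi (T s t : R) := r2 s t - 2 * r2 (s + T) t + r2 (s + T + T) t.
Definition psi (T s t : R) := rr s t - 2 * rr (s + T) t + rr (s + T + T) t.
Definition hh (T s t : R) := HH s t - 2 * HH (s + T) t + HH (s + T + T) t.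

Lemma deriv_phi (T s t : R) : is_derive t 1 (phi T s) (psi T s t).
Proof.
exact: (is_deriveD (is_deriveB (deriv_r2 s t) (is_deriveZ 2 (deriv_r2 (s+T) t))) (deriv_r2 (s+T+T) t)).
Qed.

Lemma deriv_psi (T s t : R) : t != s -> t != s + T -> t != s + T + T ->
  is_derive t 1 (psi T s) (hh T s t).
Proof.
move=> h1 h2 h3.
exact: (is_deriveD (is_deriveB (deriv_rr h1) (is_deriveZ 2 (deriv_rr h2))) (deriv_rr h3)).
Qed.

Lemma psi_cont (T s : R) : continuous (psi T s).
Proof.
move=> x.
exact: (continuousD (continuousB (@rr_cont _ s x) (continuousM (cvg_cst (2:R)) (@rr_cont _ (s+T) x))) (@rr_cont _ (s+T+T) x)).
Qed.

Lemma phi_before (T s t : R) : 0 <= T -> t <= s -> phi T s t = 0.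
Proof.
move=> T0 ts; rewrite /phi /r2 !rr_neg; try lra.
Qed.

Lemma psi_before (T s t : R) : 0 <= T -> t <= s -> psi T s t = 0.
Proof.
move=> T0 ts; rewrite /psi !rr_neg; try lra.
Qed.

Lemma phi_after (T s t : R) : 0 <= T -> s + T + T <= t -> phi T s t = T ^+ 2.
Proof.
move=> T0 ts; rewrite /phi /r2 !rr_pos; try lra.
Qed.

Lemma psi_after (T s t : R) : 0 <= T -> s + T + T <= t -> psi T s t = 0.
Proof.
move=> T0 ts; rewrite /psi !rr_pos; try lra.
Qed.

Lemma phi_mid (T s t : R) : 0 <= T -> s <= t <= s + T + T ->
  0 <= phi T s t <= T ^+ 2.
Proof.
move=> T0 /andP[ts1 ts2]; rewrite /phi /r2.
have [t1|t1] := leP t (s + T).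
  rewrite (rr_pos ts1) (rr_neg t1) (@rr_neg _ (s + T + T)); last lra.
  rewrite expr0n /= !mul0r mulr0 subr0 addr0.
  apply/andP; split; first by rewrite divr_ge0 ?sqr_ge0.
  have h1 : 0 <= t - s <= T by apply/andP; split; lra.
  have : (t - s) ^+ 2 <= T ^+ 2.
    by rewrite ler_sqr ?nnegrE; lra.
  by move=> H; have := sqr_ge0 (t - s); lra.
rewrite (rr_pos ts1) (@rr_pos _ (s + T)); last lra.
rewrite (@rr_neg _ (s + T + T)); last lra.
rewrite expr0n /= mul0r addr0.
have H1 := sqr_ge0 (s + T + T - t).
have H2 : 0 <= (t - s - T) * (s + T + T + T - t) by apply: mulr_ge0; lra.
apply/andP; split; lra.
Qed.

Lemma hh_vals (T s t : R) : 0 <= T -> s <= t ->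
  hh T s t = (if t - s < T then 1 else if t - s - T < T then -1 else 0).
Proof.
move=> T0 st; rewrite /hh /HH.
case: ifP => [h1|h1]; case: ifP => [h2|h2]; case: ifP => [h3|h3];
  case: ifP => [h4|h4]; try case: ifP => [h5|h5]; lra.
Qed.

End S4.

Section S5.
Variables (R : realType) (n : nat).
Notation vec := 'rV[R]_n.

Lemma hh_before (T s t : R) : 0 <= T -> t < s -> hh T s t = 0.
Proof.
move=> T0 ts; rewrite /hh /HH.
case: ifP => [h1|h1]; case: ifP => [h2|h2]; case: ifP => [h3|h3]; lra.
Qed.

Fixpoint Qf (q : vec) (vs : seq vec) (s t : R) {struct vs} : vec :=
  if vs is q' :: vs' then phi (TE q q') s t *: aE q q' + Qf q' vs' (s + TE q q' + TE q q') t
  else 0.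
Fixpoint Pf (q : vec) (vs : seq vec) (s t : R) {struct vs} : vec :=
  if vs is q' :: vs' then psi (TE q q') s t *: aE q q' + Pf q' vs' (s + TE q q' + TE q q') t
  else 0.
Fixpoint Af (q : vec) (vs : seq vec) (s t : R) {struct vs} : vec :=
  if vs is q' :: vs' then hh (TE q q') s t *: aE q q' + Af q' vs' (s + TE q q' + TE q q') t
  else 0.

Lemma dur_cons (q q' : vec) vs : duration (bang_bang q (q' :: vs)) =
  TE q q' + (TE q q' + duration (bang_bang q' vs)).
Proof. by rewrite /duration /= !big_cons. Qed.

Lemma dur_ge0 (q : vec) vs : 0 <= duration (bang_bang q vs).
Proof.
elim: vs q => [|q' vs IH] q; first by rewrite /duration big_nil.
by rewrite dur_cons; apply: addr_ge0; [exact: TE_ge0 | apply: addr_ge0; [exact: TE_ge0|exact: IH]].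
Qed.

Lemma Qf_before (q : vec) vs s t : t <= s -> Qf q vs s t = 0.
Proof.
elim: vs q s => [|q' vs IH] q s ts //=.
have T0 := TE_ge0 q q'.
rewrite phi_before // scale0r add0r IH //; lra.
Qed.

Lemma Pf_before (q : vec) vs s t : t <= s -> Pf q vs s t = 0.
Proof.
elim: vs q s => [|q' vs IH] q s ts //=.
have T0 := TE_ge0 q q'.
rewrite psi_before // scale0r add0r IH //; lra.
Qed.

Lemma Af_before (q : vec) vs s t : t < s -> Af q vs s t = 0.
Proof.
elim: vs q s => [|q' vs IH] q s ts //=.
have T0 := TE_ge0 q q'.
rewrite hh_before // scale0r add0r IH //; lra.
Qed.

Lemma Af_ctrl (q : vec) vs s t : s <= t ->
  Af q vs s t = ctrl_at (bang_bang q vs) (t - s).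
Proof.
elim: vs q s => [|q' vs IH] q s ts //=.
have T0 := TE_ge0 q q'.
rewrite hh_vals //.
case: ifP => h1.
  by rewrite scale1r Af_before ?addr0 //; lra.
case: ifP => h2.
  by rewrite scaleN1r Af_before ?addr0 //; lra.
rewrite scale0r add0r IH; last lra.
by congr ctrl_at; rewrite !opprD !addrA.
Qed.

Lemma Qf_end (q : vec) vs s t : s + duration (bang_bang q vs) <= t ->
  Qf q vs s t = last q vs - q.
Proof.
elim: vs q s => [|q' vs IH] q s ts /=; first by rewrite subrr.
have T0 := TE_ge0 q q'.
have D0 := dur_ge0 q' vs.
rewrite dur_cons in ts.
rewrite phi_after ?aE_T2; last lra; last done.
rewrite IH; last lra.
by rewrite addrC subrKA.
Qed.

Lemma Pf_end (q : vec) vs s t : s + duration (bang_bang q vs) <= t ->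
  Pf q vs s t = 0.
Proof.
elim: vs q s => [|q' vs IH] q s ts //=.
have T0 := TE_ge0 q q'.
have D0 := dur_ge0 q' vs.
rewrite dur_cons in ts.
rewrite psi_after ?scale0r ?add0r; last lra; last done.
rewrite IH //; lra.
Qed.

End S5.



Section S6.
Variables (R : realType) (n : nat).
Notation vec := 'rV[R]_n.

Lemma Qf_deriv (q : vec) vs s (t : R) : is_derive t 1 (Qf q vs s) (Pf q vs s t).
Proof.
elim: vs q s => [|q' vs IH] q s /=.
  exact: is_derive_cst.
exact: (is_deriveD (is_deriveZr_vec (aE q q') (deriv_phi (TE q q') s t)) (IH q' _)).
Qed.

Lemma Pf_deriv (q : vec) vs s (t : R) : t != s ->
  t \notin switch_times (bang_bang q vs) s ->
  is_derive t 1 (Pf q vs s) (Af q vs s t).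
Proof.
elim: vs q s => [|q' vs IH] q s /=.
  by move=> _ _; exact: is_derive_cst.
rewrite !inE negb_or => ts /andP[t1 /norP[t2 t3]].
exact: (is_deriveD (is_deriveZr_vec (aE q q') (deriv_psi ts t1 t2)) (IH q' _ t2 t3)).
Qed.

Lemma Pf_cont (q : vec) vs s : continuous (Pf q vs s).
Proof.
elim: vs q s => [|q' vs IH] q s /=.
  by move=> x; exact: cvg_cst.
move=> x.
have h1 := (continuousZr_tmp (a:=aE q q') (@psi_cont _ (TE q q') s x)).
have h2 := IH q' (s + TE q q' + TE q q') x.
have h3 := continuousD h1 h2.
exact: h3.
Qed.

Lemma Qf_in (C : set vec) (q : vec) vs s t : C q -> segments_in C q vs ->
  s <= t <= s + duration (bang_bang q vs) -> C (q + Qf q vs s t).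
Proof.
elim: vs q s => [|q' vs IH] q s Cq /=.
  by move=> _ _; rewrite addr0.
move=> [seg segs] /andP[ts1 ts2].
rewrite dur_cons in ts2.
have T0 := TE_ge0 q q'.
have D0 := dur_ge0 q' vs.
have Cq' : C q'.
  have := seg 1; rewrite subrr scale0r add0r scale1r; apply.
  by rewrite ler01 lexx.
have [h|h] := leP t (s + TE q q' + TE q q').
  rewrite (Qf_before _ _ h) addr0.
  have [Te|Tn] := eqVneq (TE q q') 0.
    rewrite phi_before ?scale0r ?addr0 //; lra.
  have T2n : TE q q' ^+ 2 != 0 by rewrite expf_neq0.
  have /andP[p0 p1] : 0 <= phi (TE q q') s t <= TE q q' ^+ 2.
    by apply: phi_mid => //; rewrite ts1 h.
  set l := phi (TE q q') s t / TE q q' ^+ 2.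
  have E : phi (TE q q') s t = l * TE q q' ^+ 2 by rewrite /l mulfVK.
  rewrite E -scalerA aE_T2.
  have -> : q + l *: (q' - q) = (1 - l) *: q + l *: q'.
    by rewrite scalerBr scalerBl scale1r addrA addrAC.
  apply: seg; apply/andP; split.
    by rewrite /l divr_ge0 // sqr_ge0.
  have T2p : 0 < TE q q' ^+ 2 by rewrite lt_neqAle eq_sym T2n sqr_ge0.
  by rewrite /l ler_pdivrMr // mul1r.
rewrite phi_after ?aE_T2; [|done|lra].
rewrite addrA [q + _]addrC subrK.
apply: IH => //; apply/andP; split; lra.
Qed.

Lemma ctrl_bound (q : vec) vs t i : -1 <= ctrl_at (bang_bang q vs) t 0 i <= 1.
Proof.
elim: vs q t => [|q' vs IH] q t /=.
  by rewrite mxE; lra.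
case: ifP => _; first exact: aE_bound.
case: ifP => _; last exact: IH.
rewrite mxE; have := aE_bound q q' i; lra.
Qed.

End S6.

Unset Implicit Arguments.

Theorem proposition6 (R : realType) (n : nat) (Cfree : set 'rV[R]_n)
    (qI qG : 'rV[R]_n) (vs : seq 'rV[R]_n) :
  open Cfree -> Cfree qI -> Cfree qG ->
  last qI vs = qG -> segments_in Cfree qI vs ->
  let u := bang_bang qI vs in
  let tF := duration u in
  (forall t, 0 <= t <= tF -> forall i, -1 <= ctrl_at u t 0 i <= 1) /\
  exists q p : R -> 'rV[R]_n,
    [/\ DI_trajectory u qI 0 q p,
        (forall t, 0 <= t <= tF -> Cfree (q t)),
        q tF = qG & p tF = 0].
Proof.
move=> _ CI _ Hlast seg u tF.
split.
  by move=> t _ i; exact: ctrl_bound.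
have dq : forall t : R, is_derive t 1 (fun t => qI + Qf qI vs 0 t) (Pf qI vs 0 t).
  move=> t; apply: is_derive_eq; last exact: add0r.
  exact: (is_deriveD (is_derive_cst qI t 1) (Qf_deriv qI vs 0 t)).
have D0 := dur_ge0 qI vs.
exists (fun t => qI + Qf qI vs 0 t), (Pf qI vs 0).
split.
- split.
  + by rewrite Qf_before // addr0 Pf_before.
  + apply: derivable_within_continuous => x _.
    exact: (@ex_derive _ _ _ _ _ _ _ (dq x)).
  + apply: continuous_subspaceT; exact: Pf_cont.
  + by move=> t _; exact: dq.
  + move=> t /andP[t0 _] tsw.
    have := Pf_deriv (lt0r_neq0 t0) tsw.
    by rewrite Af_ctrl ?subr0 // ltW.
- move=> t ht; apply: Qf_in => //; by rewrite add0r.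
- by rewrite Qf_end ?add0r // Hlast addrC subrK.
- by rewrite Pf_end ?add0r.
Qed.
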